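(* Let $k\geq 0$ and put $T_i=2^{i}(2^{i+1}+1)$. Then there exist rational numbers $\alpha_0,\dots,\alpha_k$ (depending on $k$ but not on $n$) such that for all $n\geq 0$: $$S_k(n)=\sum_{i=0}^{k/2}\alpha_{2i}T_{2i}^{\,n}\ \text{ if $k$ is even},\qquad S_k(n)=\sum_{i=1}^{(k+1)/2}\alpha_{2i-1}T_{2i-1}^{\,n}\ \text{ if $k$ is odd}.$$
   Context: The Stern polynomials $B_n(t)\in\mathbb{Z}[t]$ are defined by $B_0(t)=0$, $B_1(t)=1$, and for $n\geq 1$: $B_{2n}(t)=tB_n(t)$, $B_{2n+1}(t)=B_n(t)+B_{n+1}(t)$. For $n\geq1$ let $e(n)=\deg B_n(t)$. For $k,n\geq 0$ let $S_k(n)=\sum_{a\geq 1:\;e(a)=n}a^{k}$ (a finite sum over the positive integers $a$ with $e(a)=n$). *)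

(* Defs.v *)
From HB Require Import structures.
From mathcomp Require Import all_boot all_order all_algebra.
Set Implicit Arguments. Unset Strict Implicit. Unset Printing Implicit Defensive.
Import Order.TTheory GRing.Theory Num.Theory.
Local Open Scope ring_scope.

(* Stern polynomials B_n(t) in Z[t], computed with fuel (fuel = n suffices,
   since the recursive calls are on m, m+1 <= n-1 for n >= 2). *)
Fixpoint stern_aux (fuel n : nat) : {poly int} :=
  match fuel with
  | 0%N => 0
  | f.+1 =>
    if n is 0%N then 0 else
    if n is 1%N then 1 else
    if ~~ odd n then 'X * stern_aux f n./2
    else stern_aux f n./2 + stern_aux f (n./2).+1
  end.

Definition stern (n : nat) : {poly int} := stern_aux n n.

Definition e (n : nat) : nat := (size (stern n)).-1.

Definition T (i : nat) : nat := (2 ^ i * (2 ^ i.+1 + 1))%N.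

Lemma stern_small : stern 2 = 'X /\ stern 3 = 'X + 1.
Proof. by rewrite /stern /= mulr1 addrC. Qed.

(* Main.v *)
Require Import Defs.
From HB Require Import structures.
From mathcomp Require Import all_boot all_order all_algebra.
From Stdlib Require Import Lia.
Import Order.TTheory GRing.Theory Num.Theory.
Local Open Scope ring_scope.

Ltac gen_half := repeat match goal with
  | |- context [half ?x] => let h := fresh "h" in set h := half x in *; clearbody h
  | H : context [half ?x] |- _ => let h := fresh "h" in set h := half x in *; clearbody h
  end.
Ltac nat_lia_pre := gen_half; first [apply/ssrnat.ltP | apply/ssrnat.leP | idtac]; (repeat match goal with
  | H : is_true (_ < _)%N |- _ => move/ssrnat.ltP: H => H
  | H : is_true (_ <= _)%N |- _ => move/ssrnat.leP: H => H
  | H : is_true (_ == _)%N |- _ => move/eqP: H => H end);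
  repeat match goal with
  | H : context [addn] |- _ => rewrite -plusE in H
  | H : context [muln] |- _ => rewrite -multE in H
  | H : context [subn] |- _ => rewrite -minusE in H end;
  rewrite -?plusE -?multE -?minusE.
Ltac nat_lia := intros; gen_half; first [apply/ssrnat.ltP | apply/ssrnat.leP | idtac]; (repeat match goal with
  | H : is_true (_ < _)%N |- _ => move/ssrnat.ltP: H => H
  | H : is_true (_ <= _)%N |- _ => move/ssrnat.leP: H => H
  | H : is_true (_ == _)%N |- _ => move/eqP: H => H end);
  repeat match goal with
  | H : context [addn] |- _ => rewrite -plusE in H
  | H : context [muln] |- _ => rewrite -multE in H
  | H : context [subn] |- _ => rewrite -minusE in H end;
  rewrite -?plusE -?multE -?minusE; lia.

Lemma half_spec n : exists2 r, (r <= 1)%N & n = (r + 2 * n./2)%N.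
Proof. by exists (odd n); [case: odd | rewrite mul2n odd_double_half]. Qed.

Lemma stern_auxE_gen f : forall g n, (n <= f)%N -> (n <= g)%N -> stern_aux f n = stern_aux g n.
Proof.
elim: f => [|f IH] g n hf hg.
  by move: hf; rewrite leqn0 => /eqP ->; case: g {hg}.
case: g hg => [|g] hg; first by move: hg; rewrite leqn0 => /eqP ->.
case: n hf hg => [|[|n]] hf hg //=.
have hs : n = (odd n + 2 * n./2)%N by rewrite mul2n odd_double_half.
case ho: (odd n) hs => /= hs.
  all: rewrite (IH g) ?(IH g n./2.+2) //.
  all: move: hs hf hg; clear; move=> hs hf hg.
  all: first [apply/ssrnat.ltP | apply/ssrnat.leP]; move/ssrnat.ltP: hf => hf; move/ssrnat.ltP: hg=> hg; rewrite -?plusE -?multE in hs. all: try lia. all: generalize (half n) hs; clear; intros; lia.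
Qed.

Lemma stern_auxE f n : (n <= f)%N -> stern_aux f n = stern n.
Proof. by move=> h; rewrite /stern (@stern_auxE_gen f n n). Qed.

Lemma stern_aux_S f n : stern_aux f.+1 n.+2 =
  if ~~ odd n.+2 then 'X * stern_aux f (n.+2)./2
  else stern_aux f (n.+2)./2 + stern_aux f ((n.+2)./2).+1.
Proof. by []. Qed.

Lemma stern_rec n : (2 <= n)%N -> stern n =
  if ~~ odd n then 'X * stern n./2 else stern n./2 + stern (n./2).+1.
Proof.
move=> h; rewrite -(@stern_auxE n.+1 n (leqnSn n)).
case: n h => [|[|n]] // _; rewrite stern_aux_S.
have [r hr hs] := half_spec n.+2.
move: hs; set h := (n.+2)./2 => hs; clearbody h.
by rewrite !stern_auxE //; nat_lia.
Qed.

Lemma stern0 : stern 0 = 0. Proof. by []. Qed.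
Lemma stern1 : stern 1 = 1. Proof. by []. Qed.

Lemma stern_even m : (0 < m)%N -> stern (2 * m) = 'X * stern m.
Proof.
move=> h; rewrite stern_rec; last by nat_lia.
by rewrite mul2n odd_double /= doubleK.
Qed.

Lemma stern_odd m : (0 < m)%N -> stern (2 * m).+1 = stern m + stern m.+1.
Proof.
move=> h; rewrite stern_rec; last by nat_lia.
rewrite mul2n /= odd_double /=.
by have := half_bit_double m true => /= ->.
Qed.

Definition nn (p : {poly int}) := forall i, 0 <= p`_i.

Lemma half_lt n : (2 <= n)%N -> (n./2 < n)%N /\ (odd n -> (n./2).+1 < n)%N.
Proof.
move=> h; have hs : n = (odd n + 2 * n./2)%N by rewrite mul2n odd_double_half.
case: (odd n) hs => /= hs; (split; [nat_lia | move=> //= _; nat_lia]).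
Qed.

Lemma nn_stern n : nn (stern n).
Proof.
elim/ltn_ind: n => n IH.
case: n IH => [|[|n]] IH i.
- by rewrite coef0.
- by rewrite stern1 coef1; case: (i == 0)%N.
have [h1 h2] := @half_lt n.+2 isT.
rewrite stern_rec //; case ho: (odd n.+2) => /=.
  by rewrite coefD addr_ge0 //; apply: IH; rewrite // h2.
by rewrite coefXM; case: (i == 0)%N => //; apply: IH.
Qed.

Lemma size_le_add p q : nn p -> nn q -> (size p <= size (p + q)%R)%N.
Proof.
move=> hp hq; case sp: (size p) => [//|s].
rewrite leqNgt; apply/negP => lt.
have h0 : (p + q)`_s = 0 by rewrite nth_default // -ltnS.
have hl : p`_s != 0.
  have : lead_coef p != 0.
    by rewrite lead_coef_eq0 -size_poly_gt0 sp.
  by rewrite lead_coefE sp.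
have hpos : 0 < p`_s by rewrite lt0r hl hp.
move: h0; rewrite coefD => /eqP; apply/negP.
by rewrite gt_eqF // addrC ltr_wpDl.
Qed.

Lemma size_add_nn p q : nn p -> nn q -> size (p + q) = maxn (size p) (size q).
Proof.
move=> hp hq; apply/eqP; rewrite eqn_leq size_polyD /= geq_max.
by rewrite size_le_add // addrC size_le_add.
Qed.

Lemma stern_neq0 n : (0 < n)%N -> stern n != 0.
Proof.
elim/ltn_ind: n => n IH.
case: n IH => [|[|n]] IH // _.
  by rewrite stern1 oner_neq0.
have [h1 h2] := @half_lt n.+2 isT.
have hp : (0 < (n.+2)./2)%N by case: n {IH h1 h2}.
rewrite stern_rec //; case ho: (odd n.+2) => /=.
  rewrite -size_poly_gt0 (@size_add_nn _ _ (nn_stern _) (nn_stern _)).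
  by rewrite (leq_trans _ (leq_maxl _ _)) // size_poly_gt0 IH.
by apply: mulf_neq0; rewrite ?polyX_eq0 ?IH.
Qed.

Lemma e_even m : (0 < m)%N -> e (2 * m) = (e m).+1.
Proof.
move=> h; rewrite /e stern_even // mulrC size_mulX ?stern_neq0 //=.
by rewrite prednK // size_poly_gt0 stern_neq0.
Qed.

Lemma pred_maxn a b : (maxn a b).-1 = maxn a.-1 b.-1.
Proof. by case: a => [|a]; case: b => [|b]; rewrite ?max0n ?maxn0 ?maxnSS. Qed.

Lemma e_odd m : (0 < m)%N -> e (2 * m).+1 = maxn (e m) (e m.+1).
Proof.
by move=> h; rewrite /e stern_odd // (@size_add_nn _ _ (nn_stern _) (nn_stern _)) pred_maxn.
Qed.

Lemma e1 : e 1 = 0%N.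
Proof. by rewrite /e stern1 size_poly1. Qed.

Lemma e2 : e 2 = 1%N.
Proof. by rewrite (@e_even 1) // e1. Qed.

Lemma e_diff m : (0 < m)%N -> (e m.+1 <= (e m).+1)%N /\ (e m <= (e m.+1).+1)%N.
Proof.
elim/ltn_ind: m => m IH hm.
have hs : m = (odd m + 2 * m./2)%N by rewrite mul2n odd_double_half.
move: hs; set j := m./2; clearbody j; case: (odd m) => /= hs.
  case: j hs => [|j] hs.
    have -> : m = 1%N by nat_lia.
    by rewrite e1 e2.
  have hj : (j.+1 < m)%N by nat_lia.
  have [i1 i2] := IH _ hj isT.
  have -> : m = (2 * j.+1).+1 by nat_lia.
  have -> : (2 * j.+1).+2 = (2 * j.+2)%N by nat_lia.
  rewrite e_odd // e_even //.
  by split; [rewrite ltnS leq_max leqnn orbT | rewrite geq_max; apply/andP; split; nat_lia].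
have hj0 : (0 < j)%N by nat_lia.
have hj : (j < m)%N by nat_lia.
have [i1 i2] := IH _ hj hj0.
have -> : m = (2 * j)%N by nat_lia.
rewrite e_odd // e_even //.
by split; [rewrite geq_max; apply/andP; split; nat_lia | rewrite ltnS leq_max leqnn].
Qed.

Lemma e_odd_le m : (0 < m)%N -> (e (2 * m).+1 <= e (2 * m))%N.
Proof.
move=> h; rewrite e_odd // e_even // geq_max leqnSn /=.
by have [i1 _] := @e_diff m h.
Qed.

Lemma e_4p1 b : (0 < b)%N -> e (4 * b).+1 = (e b).+1.
Proof.
move=> h; have -> : (4 * b = 2 * (2 * b))%N by rewrite mulnA.
rewrite e_odd ?muln_gt0 // (maxn_idPl (@e_odd_le b h)) e_even //.
Qed.

Lemma e_4m1 b : (0 < b)%N -> e (4 * b).-1 = (e b).+1.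
Proof.
move=> h; have -> : (4 * b).-1 = (2 * (2 * b).-1).+1 by nat_lia.
have h1 : (0 < (2 * b).-1)%N by nat_lia.
rewrite e_odd // prednK ?muln_gt0 //.
rewrite (maxn_idPr _) ?e_even //.
case: b h h1 => [|[|b]] // _ _.
have -> : (2 * b.+2).-1 = (2 * b.+1).+1 by nat_lia.
rewrite e_odd // geq_max leqnSn andbT.
by have [_ i2] := @e_diff b.+1 isT.
Qed.

Lemma decomp a : (2 <= a)%N -> exists2 b, (0 < b)%N &
  [\/ a = (2 * b)%N, a = (4 * b).+1 | a = (4 * b).-1].
Proof.
move=> ha.
have [r hr hs] := half_spec a; have [r' hr' hs'] := half_spec a./2.
move: hs hs'; generalize (a./2./2) => hh; generalize (a./2) => h hs hs'.
case: r hr hs => [|[|r]] // _ hs.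
  exists h; [nat_lia | by constructor 1; nat_lia].
case: r' hr' hs' => [|[|r']] // _ hs'.
  exists hh; [nat_lia | by constructor 2; nat_lia].
exists hh.+1; [nat_lia | by constructor 3; nat_lia].
Qed.

Lemma e_pos a : (2 <= a)%N -> (0 < e a)%N.
Proof.
move=> /decomp [b hb [] ->].
- by rewrite e_even.
- by rewrite e_4p1.
- by rewrite e_4m1.
Qed.

Fixpoint E (n : nat) : seq nat :=
  match n with
  | 0%N => [:: 1%N]
  | n'.+1 => [seq (2 * b)%N | b <- E n'] ++ [seq (4 * b).-1 | b <- E n']
               ++ [seq (4 * b).+1 | b <- E n']
  end.

Lemma mem_E n a : (a \in E n) = (0 < a)%N && (e a == n).
Proof.
elim: n a => [|n IH] a.
  rewrite inE; case: a => [|[|a]] //; first by rewrite e1.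
  by rewrite /= eq_sym; apply/esym/negbTE; rewrite -lt0n e_pos.
apply/idP/idP.
  rewrite /= !mem_cat => /or3P [] /mapP [b hb ->]; move: hb; rewrite IH => /andP [hb /eqP he].
  - by rewrite e_even // he eqxx andbT muln_gt0.
  - by rewrite e_4m1 // he eqxx andbT; nat_lia.
  - by rewrite e_4p1 // he eqxx andbT.
move=> /andP [ha /eqP he].
have ha2 : (2 <= a)%N.
  by case: a ha he => [|[|a]] //; rewrite e1.
have [b hb hd] := @decomp a ha2.
have hbE : b \in E n.
  rewrite IH hb /=; case: hd => hd; move: he; rewrite hd.
  - by rewrite e_even // => -[->].
  - by rewrite e_4p1 // => -[->].
  - by rewrite e_4m1 // => -[->].
rewrite /= !mem_cat; case: hd => ->.
- by rewrite (map_f (fun b => 2 * b)%N hbE).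
- by rewrite (map_f (fun b => (4 * b).+1)%N hbE) ?orbT.
- by rewrite (map_f (fun b => (4 * b).-1)%N hbE) ?orbT.
Qed.

Lemma pos_E n a : a \in E n -> (0 < a)%N.
Proof. by rewrite mem_E => /andP []. Qed.

Lemma uniq_E n : uniq (E n).
Proof.
elim: n => [|n IH] //=.
rewrite !cat_uniq !map_inj_in_uniq ?IH //=; last first.
all: try (move=> x y hx hy; have := @pos_E _ _ hx; have := @pos_E _ _ hy; nat_lia).
rewrite has_cat negb_or andbT -andbA; apply/and3P; split.
- apply/hasPn => x /mapP [b hb ->]; apply/negP => /mapP [c hc].
  have := @pos_E _ _ hb; nat_lia.
- apply/hasPn => x /mapP [b hb ->]; apply/negP => /mapP [c hc].
  have := @pos_E _ _ hb; nat_lia.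
- apply/hasPn => x /mapP [b hb ->]; apply/negP => /mapP [c hc].
  have := @pos_E _ _ hb; have := @pos_E _ _ hc; nat_lia.
Qed.

Definition GS (I : seq nat) (f : nat -> rat) :=
  exists alpha : nat -> rat, forall n, f n = \sum_(i <- I) alpha i * (T i)%:R ^+ n.

Lemma GS_ext I f g : (forall n, f n = g n) -> GS I g -> GS I f.
Proof. by move=> h [a ha]; exists a => n; rewrite h ha. Qed.

Lemma GS0 I : GS I (fun _ => 0).
Proof. by exists (fun _ => 0) => n; rewrite big1 // => i _; rewrite mul0r. Qed.

Lemma GS_add I f g : GS I f -> GS I g -> GS I (fun n => f n + g n).
Proof.
move=> [a ha] [b hb]; exists (fun i => a i + b i) => n.
by rewrite ha hb -big_split /=; apply: eq_bigr => i _; rewrite mulrDl.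
Qed.

Lemma GS_scale I c f : GS I f -> GS I (fun n => c * f n).
Proof.
move=> [a ha]; exists (fun i => c * a i) => n.
by rewrite ha mulr_sumr; apply: eq_bigr => i _; rewrite mulrA.
Qed.

Lemma GS_sum I m (F : nat -> nat -> rat) :
  (forall i, (i < m)%N -> GS I (F i)) -> GS I (fun n => \sum_(0 <= i < m) F i n).
Proof.
elim: m => [|m IH] h.
  by apply: (@GS_ext I _ _ _ (GS0 I)) => n; rewrite big_geq.
have IH' : GS I (fun n => \sum_(0 <= i < m) F i n).
  by apply: IH => i hi; apply: h; rewrite ltnW.
have H2 := @GS_add _ _ _ IH' (h m (ltnSn m)).
apply: (@GS_ext _ _ _ _ H2).
by move=> n; rewrite big_nat_recr.
Qed.

Lemma GS_sub I J f : uniq I -> uniq J -> {subset I <= J} -> GS I f -> GS J f.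
Proof.
move=> uI uJ sIJ [a ha]; exists (fun i => if i \in I then a i else 0) => n.
rewrite ha.
have hp : perm_eq I [seq i <- J | i \in I].
  apply: uniq_perm => //; first by rewrite filter_uniq.
  by move=> x; rewrite mem_filter; case hx: (x \in I) => //=; rewrite sIJ.
rewrite (perm_big _ hp) big_filter big_mkcond /=.
by apply: eq_bigr => i _; case: (i \in I); rewrite ?mul0r.
Qed.

Lemma T_lt i j : (i < j)%N -> (T i < T j)%N.
Proof.
move=> h; rewrite /T ltn_mul // ?ltn_exp2l //.
by rewrite ltn_add2r ltn_exp2l.
Qed.

Lemma T_inj i j : T i = T j -> i = j.
Proof.
move=> h; case: (ltngtP i j) => // hij.
  by move: (@T_lt _ _ hij); rewrite h ltnn.
by move: (@T_lt _ _ hij); rewrite h ltnn.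
Qed.

Lemma GS_step I k f g : k \notin I -> GS I g ->
  (forall n, f n.+1 = (T k)%:R * f n + g n) -> GS (k :: I) f.
Proof.
move=> hk [a ha] hf.
set t : rat := (T k)%:R.
pose gam i := a i / ((T i)%:R - t).
pose C := f 0%N - \sum_(i <- I) gam i.
exists (fun i => if i == k then C else gam i) => n.
rewrite big_cons eqxx.
have -> : \sum_(i <- I) (if i == k then C else gam i) * (T i)%:R ^+ n =
          \sum_(i <- I) gam i * (T i)%:R ^+ n.
  apply: eq_big_seq => i hi; case: eqP => // eik.
  by move: hi hk; rewrite eik => ->.
elim: n => [|n IHn].
  rewrite expr0 mulr1 (eq_bigr gam); last by move=> i _; rewrite expr0 mulr1.
  by rewrite /C subrK.
rewrite hf IHn ha mulrDr mulrCA -exprS -addrA; congr (_ + _).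
rewrite mulr_sumr -big_split /=; apply: eq_big_seq => i hi.
have hd : (T i)%:R - t != 0.
  rewrite subr_eq0 eqr_nat; apply/negP => /eqP /T_inj eik.
  by move: hi hk; rewrite eik => ->.
have hA : a i = gam i * ((T i)%:R - t) by rewrite /gam divfK.
rewrite hA exprS.
set X := (T i)%:R ^+ n; set d := (T i)%:R - t; set g' := gam i.
have -> : ((T i)%:R : rat) = d + t by rewrite /d subrK.
clearbody X d g'.
rewrite mulrDl mulrDr addrC !mulrA; congr (_ + _); congr (_ * _); exact: mulrC.
Qed.

Definition cc k i : rat := 4%:R ^+ (k - i.+1) * ((-1) ^+ i.+1 + 1) *+ 'C(k, i.+1).

Lemma T_rat k : (T k)%:R = 2%:R ^+ k + 2%:R * 4%:R ^+ k :> rat.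
Proof.
have -> : T k = (2 ^ k + 2 * 4 ^ k)%N.
  by rewrite /T mulnDr muln1 addnC expnS mulnCA -expnMn.
by rewrite natrD natrM !natrX.
Qed.

Lemma term_id (x : rat) k :
  (2%:R * x) ^+ k + ((4%:R * x - 1) ^+ k + (4%:R * x + 1) ^+ k) =
  (T k)%:R * x ^+ k + \sum_(0 <= i < k) cc k i * x ^+ (k - i.+1).
Proof.
have hD : (4%:R * x - 1) ^+ k + (4%:R * x + 1) ^+ k =
    \sum_(i < k.+1) (4%:R * x) ^+ (k - i) * ((-1) ^+ i + 1) *+ 'C(k, i).
  rewrite !exprDn -big_split /=; apply: eq_bigr => i _.
  by rewrite expr1n -mulrnDl -mulrDr.
rewrite hD big_ord_recl subn0 expr0 bin0 mulr1n !exprMn T_rat addrA.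
congr (_ + _).
  rewrite [in RHS]mulrDl; congr (_ + _).
  by rewrite mulrC mulrA.
rewrite big_mkord; apply: eq_bigr => i _.
by rewrite lift0 /cc exprMn mulrnAl mulrAC.
Qed.

Definition P k n : rat := ((\sum_(a <- E n) a ^ k)%N)%:R.

Lemma PE k n : P k n = \sum_(a <- E n) (a%:R : rat) ^+ k.
Proof. by rewrite /P natr_sum; apply: eq_bigr => a _; rewrite natrX. Qed.

Lemma P_rec k n : P k n.+1 =
  (T k)%:R * P k n + \sum_(0 <= i < k) cc k i * P (k - i.+1) n.
Proof.
rewrite !PE /= !big_cat !big_map /=.
transitivity (\sum_(b <- E n) ((2%:R * (b%:R : rat)) ^+ k +
   ((4%:R * b%:R - 1) ^+ k + (4%:R * b%:R + 1) ^+ k))).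
  rewrite !big_split /=; congr (_ + (_ + _)); apply: eq_big_seq => b hb.
  - by rewrite natrM.
  - have hb1 : (1 <= 4 * b)%N by have := @pos_E _ _ hb; nat_lia.
    by rewrite -subn1 natrB // natrM.
  - by rewrite -addn1 natrD natrM.
rewrite (eq_bigr _ (fun b _ => term_id b%:R k)).
rewrite big_split /= -mulr_sumr; congr (_ + _).
rewrite exchange_big /=; apply: eq_bigr => i _.
by rewrite PE mulr_sumr.
Qed.

Definition Ik k := [seq i <- iota 0 k.+1 | odd i == odd k].

Lemma GS_P k : GS (Ik k) (P k).
Proof.
elim/ltn_ind: k => k IH.
set J := [seq i <- iota 0 k | odd i == odd k].
have kJ : k \notin J by rewrite mem_filter mem_iota add0n ltnn !andbF.
have uJ : uniq J by rewrite filter_uniq // iota_uniq.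
have hstep : GS (k :: J) (P k).
  apply: (@GS_step J k (P k) (fun n => \sum_(0 <= i < k) cc k i * P (k - i.+1) n)).
  - exact: kJ.
  - apply: GS_sum => i hi.
    case ho: (odd i.+1).
      apply: (@GS_ext _ _ _ _ (GS0 J)) => n.
      by rewrite /cc -signr_odd ho expr1 addNr mulr0 mul0rn mul0r.
    have hj : (k - i.+1 < k)%N by nat_lia.
    apply: GS_scale.
    apply: (@GS_sub (Ik (k - i.+1)) J _ _ _ _ (IH _ hj)).
    + by rewrite filter_uniq // iota_uniq.
    + exact: uJ.
    + move=> x; rewrite !mem_filter !mem_iota /= add0n oddB // ho addbF.
      by move=> /andP [-> hx] /=; nat_lia.
  - by move=> n; rewrite P_rec.
apply: (@GS_sub _ _ _ _ _ _ hstep).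
- by rewrite /= kJ uJ.
- by rewrite filter_uniq // iota_uniq.
- move=> x; rewrite inE => /orP [/eqP ->|].
    by rewrite mem_filter eqxx mem_iota /= add0n ltnSn.
  rewrite !mem_filter !mem_iota /= !add0n => /andP [-> hx] /=.
  by rewrite ltnS ltnW.
Qed.

Lemma odd2 m : odd (2 * m) = false.
Proof. by rewrite mul2n odd_double. Qed.

Lemma sum_even m (F : nat -> rat) :
  \sum_(0 <= i < (2 * m).+1 | odd i == false) F i = \sum_(0 <= i < m.+1) F (2 * i)%N.
Proof.
elim: m => [|m IH]; first by rewrite big_mkcond !big_nat1.
have -> : (2 * m.+1).+1 = ((2 * m).+1).+2 by nat_lia.
rewrite big_mkcond big_nat_recr // big_nat_recr // -big_mkcond IH [in RHS]big_nat_recr //=.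
rewrite odd2 /= addr0; congr (_ + _); congr F; nat_lia.
Qed.

Lemma sum_odd m (F : nat -> rat) :
  \sum_(0 <= i < (2 * m).+2 | odd i == true) F i = \sum_(1 <= i < m.+2) F (2 * i).-1.
Proof.
elim: m => [|m IH].
  by rewrite big_mkcond big_ltn // !big_nat1 /= add0r.
have -> : (2 * m.+1).+2 = ((2 * m).+2).+2 by nat_lia.
rewrite big_mkcond big_nat_recr // big_nat_recr // -big_mkcond IH [in RHS]big_nat_recr //=.
rewrite odd2 /= addr0; congr (_ + _); congr F; nat_lia.
Qed.

Theorem mainTheorem10 (k : nat) :
  exists alpha : nat -> rat,
    forall n : nat,
      exists s : seq nat,
        [/\ uniq s,
            (forall a : nat, (a \in s) = (0 < a)%N && (e a == n)) &
            ((\sum_(a <- s) a ^ k)%N%:R : rat) =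
              (if ~~ odd k then
                 \sum_(0 <= i < (k./2).+1) alpha (2 * i)%N * (T (2 * i))%:R ^+ n
               else
                 \sum_(1 <= i < ((k.+1)./2).+1) alpha (2 * i).-1 * (T (2 * i).-1)%:R ^+ n)].
Proof.
have [alpha ha] := GS_P k.
exists alpha => n; exists (E n); split.
- exact: uniq_E.
- exact: mem_E.
rewrite -/(P k n) ha /Ik big_filter.
have -> : iota 0 k.+1 = index_iota 0 k.+1 by rewrite /index_iota subn0.
have hk : k = (odd k + 2 * k./2)%N by rewrite mul2n odd_double_half.
move: hk; set m := k./2; clearbody m.
case ho: (odd k) => /= hk.
  rewrite hk add1n /= mul2n doubleK -mul2n.
  exact: (sum_odd m (fun i => alpha i * (T i)%:R ^+ n)).
rewrite hk add0n.
exact: (sum_even m (fun i => alpha i * (T i)%:R ^+ n)).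
Qed.
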